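(* Let $(S_i,\mathscr T_i)_{i\in I}$ be a non-empty family of stable topological spaces, and equip $\prod_{i\in I}S_i$ with the stable product topology. Then $\prod_{i\in I}S_i$ is stable compact if and only if $S_i$ is stable compact for every $i\in I$.
   Context: $L^0$ is the ring of real measurable functions on a probability space modulo a.e. equality. An $L^0$-module $E$ is stable if for every countable measurable partition $(A_k)$ of $\Omega$ and $(x_k)\subset E$ there is a unique $x=\sum_k1_{A_k}x_k$ with $1_{A_k}x=1_{A_k}x_k$. A nonempty subset is stable if closed under such concatenations; for stable sets $Y_k$, $\sum_k1_{A_k}Y_k=\{\sum_k1_{A_k}y_k:y_k\in Y_k\}$, and a nonempty collection of stable sets is stable if closed under this operation. A stable topological space is a stable subset $S$ of a stable $L^0$-module with a topology having a base which is a stable collection of stable sets. A filter is stable if it has a filter base which is a stable collection of stable sets; $S$ is stable compact if every stable filter on $S$ has a cluster point in $S$. If $S_i\subset E_i$, then $\prod_iS_i$ is a stable subset of the product module $\prod_iE_i$ (concatenation coordinatewise). If $\mathscr B_i$ is a base of $\mathscr T_i$ which is a stable collection of stable sets, the stable product topology on $\prod_iS_i$ is the topology with base consisting of all sets $\sum_k1_{A_k}\prod_iU^k_i$, where $(A_k)$ is a countable measurable partition and for each $k$, $U^k_i\in\mathscr B_i$ for finitely many $i$ and $U^k_i=S_i$ for all other $i$. *)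

(* Defs.v *)
From Stdlib Require Import Reals List ClassicalEpsilon FunctionalExtensionality.
Open Scope R_scope.
Set Implicit Arguments.

Record ProbSpace := {
  Om : Type;
  meas : (Om -> Prop) -> Prop;
  prob : (Om -> Prop) -> R;
  meas_ext : forall A B : Om -> Prop, (forall w, A w <-> B w) -> meas A -> meas B;
  prob_ext : forall A B : Om -> Prop, (forall w, A w <-> B w) -> prob A = prob B;
  meas_full : meas (fun _ => True);
  meas_compl : forall A, meas A -> meas (fun w => ~ A w);
  meas_union : forall A : nat -> Om -> Prop,
      (forall n, meas (A n)) -> meas (fun w => exists n, A n w);
  prob_nonneg : forall A, meas A -> 0 <= prob A;
  prob_full : prob (fun _ => True) = 1;
  prob_sigma : forall A : nat -> Om -> Prop,
      (forall n, meas (A n)) ->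
      (forall m n, m <> n -> forall w, A m w -> A n w -> False) ->
      infinite_sum (fun n => prob (A n)) (prob (fun w => exists n, A n w))
}.

Definition measurable (P : ProbSpace) (f : Om P -> R) : Prop :=
  forall a : R, meas P (fun w => f w <= a).

Definition ae_eq (P : ProbSpace) (f g : Om P -> R) : Prop :=
  exists N : Om P -> Prop, meas P N /\ prob P N = 0 /\
    forall w, ~ N w -> f w = g w.

Arguments measurable {P} f.
Arguments ae_eq {P} f g.

Definition indic (P : ProbSpace) (A : Om P -> Prop) : Om P -> R :=
  fun w => if excluded_middle_informative (A w) then 1 else 0.

(* L^0-modules: scalar action by (representatives of) L^0 elements,   *)
(* well defined on a.e.-classes.                                       *)
Arguments indic {P} A.

Record L0Module (P : ProbSpace) := {
  car :> Type;
  mzero : car;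
  madd : car -> car -> car;
  mopp : car -> car;
  smul : (Om P -> R) -> car -> car;
  madd_assoc : forall x y z, madd x (madd y z) = madd (madd x y) z;
  madd_comm : forall x y, madd x y = madd y x;
  madd_zero : forall x, madd mzero x = x;
  madd_opp : forall x, madd (mopp x) x = mzero;
  smul_one : forall x, smul (fun _ => 1) x = x;
  smul_mul : forall f g x, measurable f -> measurable g ->
      smul f (smul g x) = smul (fun w => f w * g w) x;
  smul_addl : forall f g x, measurable f -> measurable g ->
      smul (fun w => f w + g w) x = madd (smul f x) (smul g x);
  smul_addr : forall f x y, measurable f ->
      smul f (madd x y) = madd (smul f x) (smul f y);
  smul_ae : forall f g x, measurable f -> measurable g -> ae_eq f g ->
      smul f x = smul g x
}.

Arguments mzero {P} l.
Arguments madd {P} l _ _.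
Arguments mopp {P} l _.
Arguments smul {P} l _ _.

Definition partition (P : ProbSpace) (A : nat -> Om P -> Prop) : Prop :=
  (forall k, meas P (A k)) /\
  (forall m n, m <> n -> forall w, A m w -> A n w -> False) /\
  (forall w, exists k, A k w).

Arguments partition {P} A.

Definition restr (P : ProbSpace) (E : L0Module P) (A : Om P -> Prop) (x : E) : E :=
  smul E (indic A) x.

Definition is_concat (P : ProbSpace) (E : L0Module P) (A : nat -> Om P -> Prop)
  (xs : nat -> E) (x : E) : Prop :=
  forall k, restr E (A k) x = restr E (A k) (xs k).

Definition stable_module (P : ProbSpace) (E : L0Module P) : Prop :=
  forall A, partition A -> forall xs : nat -> E,
    exists x, is_concat E A xs x /\ (forall y, is_concat E A xs y -> y = x).

Definition stable_set (P : ProbSpace) (E : L0Module P) (Y : E -> Prop) : Prop :=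
  (exists y, Y y) /\
  forall A, partition A -> forall ys : nat -> E, (forall k, Y (ys k)) ->
    forall x, is_concat E A ys x -> Y x.

Definition concat_sets (P : ProbSpace) (E : L0Module P) (A : nat -> Om P -> Prop)
  (Ys : nat -> E -> Prop) : E -> Prop :=
  fun x => exists ys : nat -> E, (forall k, Ys k (ys k)) /\ is_concat E A ys x.

Definition set_eq {X : Type} (U V : X -> Prop) : Prop := forall x, U x <-> V x.
Definition subset {X : Type} (U V : X -> Prop) : Prop := forall x, U x -> V x.

Definition stable_coll (P : ProbSpace) (E : L0Module P) (C : (E -> Prop) -> Prop) : Prop :=
  (exists Y, C Y) /\
  (forall Y, C Y -> stable_set E Y) /\
  forall A, partition A -> forall Ys : nat -> E -> Prop, (forall k, C (Ys k)) ->
    exists Z, C Z /\ set_eq Z (concat_sets E A Ys).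

Definition is_topology {X : Type} (S : X -> Prop) (T : (X -> Prop) -> Prop) : Prop :=
  (forall U, T U -> subset U S) /\
  (exists U, T U /\ set_eq U S) /\
  (exists U, T U /\ set_eq U (fun _ => False)) /\
  (forall fam : (X -> Prop) -> Prop, (forall U, fam U -> T U) ->
     exists V, T V /\ set_eq V (fun x => exists U, fam U /\ U x)) /\
  (forall U1 U2, T U1 -> T U2 -> exists V, T V /\ set_eq V (fun x => U1 x /\ U2 x)) /\
  (forall U V, T U -> set_eq U V -> T V).

Definition is_base {X : Type} (T : (X -> Prop) -> Prop) (B : (X -> Prop) -> Prop) : Prop :=
  (forall V, B V -> T V) /\
  forall U, T U -> forall x, U x -> exists V, B V /\ V x /\ subset V U.

Definition is_filter {X : Type} (S : X -> Prop) (F : (X -> Prop) -> Prop) : Prop :=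
  (forall G, F G -> subset G S) /\
  (exists G, F G /\ set_eq G S) /\
  (forall G, F G -> exists x, G x) /\
  (forall G1 G2, F G1 -> F G2 -> exists G, F G /\ set_eq G (fun x => G1 x /\ G2 x)) /\
  (forall G H, F G -> subset G H -> subset H S -> F H).

Definition is_filter_base {X : Type} (F : (X -> Prop) -> Prop) (FB : (X -> Prop) -> Prop) : Prop :=
  (forall G, FB G -> F G) /\ (forall G, F G -> exists H, FB H /\ subset H G).

Definition stable_filter (P : ProbSpace) (E : L0Module P) (S : E -> Prop)
  (F : (E -> Prop) -> Prop) : Prop :=
  is_filter S F /\ exists FB, is_filter_base F FB /\ stable_coll E FB.

Definition cluster_point {X : Type} (T : (X -> Prop) -> Prop) (F : (X -> Prop) -> Prop)
  (x : X) : Prop :=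
  forall U, T U -> U x -> forall G, F G -> exists y, U y /\ G y.

Definition stable_compact (P : ProbSpace) (E : L0Module P) (S : E -> Prop)
  (T : (E -> Prop) -> Prop) : Prop :=
  forall F, stable_filter E S F -> exists x, S x /\ cluster_point T F x.

Section ProdModule.
Variables (P : ProbSpace) (I : Type) (E : I -> L0Module P).

Definition pcar := forall i, E i.

Lemma p_assoc : forall x y z : pcar,
  (fun i => madd (E i) (x i) ((fun i => madd (E i) (y i) (z i)) i)) =
  (fun i => madd (E i) ((fun i => madd (E i) (x i) (y i)) i) (z i)).
Proof. intros; apply functional_extensionality_dep; intro i; apply madd_assoc. Qed.
Lemma p_comm : forall x y : pcar,
  (fun i => madd (E i) (x i) (y i)) = (fun i => madd (E i) (y i) (x i)).
Proof. intros; apply functional_extensionality_dep; intro i; apply madd_comm. Qed.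
Lemma p_zero : forall x : pcar,
  (fun i => madd (E i) ((fun i => mzero (E i)) i) (x i)) = x.
Proof. intros; apply functional_extensionality_dep; intro i; apply madd_zero. Qed.
Lemma p_opp : forall x : pcar,
  (fun i => madd (E i) ((fun i => mopp (E i) (x i)) i) (x i)) = (fun i => mzero (E i)).
Proof. intros; apply functional_extensionality_dep; intro i; apply madd_opp. Qed.
Lemma p_one : forall x : pcar, (fun i => smul (E i) (fun _ => 1) (x i)) = x.
Proof. intros; apply functional_extensionality_dep; intro i; apply smul_one. Qed.
Lemma p_mul : forall f g (x : pcar), measurable f -> measurable g ->
  (fun i => smul (E i) f ((fun i => smul (E i) g (x i)) i)) =
  (fun i => smul (E i) (fun w => f w * g w) (x i)).
Proof. intros; apply functional_extensionality_dep; intro i; now apply smul_mul. Qed.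
Lemma p_addl : forall f g (x : pcar), measurable f -> measurable g ->
  (fun i => smul (E i) (fun w => f w + g w) (x i)) =
  (fun i => madd (E i) ((fun i => smul (E i) f (x i)) i) ((fun i => smul (E i) g (x i)) i)).
Proof. intros; apply functional_extensionality_dep; intro i; now apply smul_addl. Qed.
Lemma p_addr : forall f (x y : pcar), measurable f ->
  (fun i => smul (E i) f ((fun i => madd (E i) (x i) (y i)) i)) =
  (fun i => madd (E i) ((fun i => smul (E i) f (x i)) i) ((fun i => smul (E i) f (y i)) i)).
Proof. intros; apply functional_extensionality_dep; intro i; now apply smul_addr. Qed.
Lemma p_ae : forall f g (x : pcar), measurable f -> measurable g -> ae_eq f g ->
  (fun i => smul (E i) f (x i)) = (fun i => smul (E i) g (x i)).
Proof. intros; apply functional_extensionality_dep; intro i; now apply smul_ae. Qed.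

Definition prodModule : L0Module P :=
  {| car := pcar;
     mzero := fun i => mzero (E i);
     madd := fun x y i => madd (E i) (x i) (y i);
     mopp := fun x i => mopp (E i) (x i);
     smul := fun f x i => smul (E i) f (x i);
     madd_assoc := p_assoc; madd_comm := p_comm; madd_zero := p_zero;
     madd_opp := p_opp; smul_one := p_one; smul_mul := p_mul;
     smul_addl := p_addl; smul_addr := p_addr; smul_ae := p_ae |}.

Definition prodSet (S : forall i, E i -> Prop) : prodModule -> Prop :=
  fun x => forall i, S i (x i).

(* basic sets  sum_k 1_{A_k} prod_i U^k_i  of the stable product topology *)
Definition prodBase (S : forall i, E i -> Prop) (B : forall i, (E i -> Prop) -> Prop)
  (V : prodModule -> Prop) : Prop :=
  exists (A : nat -> Om P -> Prop) (fin : nat -> list I)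
         (U : nat -> forall i, E i -> Prop),
    partition A /\
    (forall k i, In i (fin k) -> B i (U k i)) /\
    (forall k i, ~ In i (fin k) -> set_eq (U k i) (S i)) /\
    set_eq V (concat_sets prodModule A
                (fun k (x : prodModule) => forall i, U k i (x i))).

Definition prodTop (S : forall i, E i -> Prop) (B : forall i, (E i -> Prop) -> Prop)
  (U : prodModule -> Prop) : Prop :=
  subset U (prodSet S) /\
  forall x, U x -> exists V, prodBase S B V /\ V x /\ subset V U.

End ProdModule.

(* Main.v *)
Require Import Defs.
From Stdlib Require Import Reals List ClassicalEpsilon FunctionalExtensionality PropExtensionality Classical ProofIrrelevance Cantor Lra.
Open Scope R_scope.
Notation partition := Defs.partition.
Notation subset := Defs.subset.
Module ZW.
From mathcomp Require Import all_boot classical_sets boolp.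
Lemma myzorn (T : Type) (t0 : T) (R : T -> T -> Prop) :
  (forall t, R t t) -> (forall r s t, R r s -> R s t -> R r t) ->
  (forall A : T -> Prop, (forall s t, A s -> A t -> R s t \/ R t s) ->
     exists t, forall s, A s -> R s t) ->
  exists t, forall s, R t s -> R s t.
Proof.
move=> Rr Rt Ac.
have H1 : forall t, `[< R t t >] by move=> t; apply/asboolP.
have H2 : forall r s t, `[< R r s >] -> `[< R s t >] -> `[< R r t >].
  by move=> r s t /asboolP ? /asboolP ?; apply/asboolP; apply: Rt; eauto.
have H3 : forall A, total_on A (fun a b => `[< R a b >]) -> exists t, forall s, A s -> `[< R s t >].
  move=> A tot; have [t Ht] : exists t, forall s, A s -> R s t.
    apply: Ac => s t As At; have [/asboolP|/asboolP] := tot s t As At; auto.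
  by exists t => s As; apply/asboolP; auto.
have [t Ht] := @ZL_preorder T t0 (fun a b => `[< R a b >]) H1 H2 H3.
by exists t => s Rts; apply/asboolP; apply: Ht; apply/asboolP.
Qed.
End ZW.


Lemma seq_eq {X : Type} (U V : X -> Prop) : set_eq U V -> U = V.
Proof. intro H; apply functional_extensionality; intro x; apply propositional_extensionality; apply H. Qed.

Definition cid {A : Type} {Q : A -> Prop} (H : exists x, Q x) : A :=
  proj1_sig (constructive_indefinite_description Q H).
Lemma cid_spec {A : Type} {Q : A -> Prop} (H : exists x, Q x) : Q (cid H).
Proof. unfold cid; destruct constructive_indefinite_description; auto. Qed.

Lemma fchoice {A B : Type} (R : A -> B -> Prop) : (forall a, exists b, R a b) -> exists f : A -> B, forall a, R a (f a).
Proof. intro H. exists (fun a => cid (H a)). intro a; apply (cid_spec (H a)). Qed.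

Lemma dchoice {A : Type} {B : A -> Type} (R : forall a, B a -> Prop) : (forall a, exists b, R a b) -> exists f : (forall a, B a), forall a, R a (f a).
Proof. intro H. exists (fun a => cid (H a)). intro a; apply (cid_spec (H a)). Qed.

Section Meas.
Variable P : ProbSpace.

Lemma meas_empty : meas P (fun _ => False).
Proof. apply (meas_ext P (fun w => ~ True)). firstorder. apply meas_compl, meas_full. Qed.

Lemma meas_inter (A B : Om P -> Prop) : meas P A -> meas P B -> meas P (fun w => A w /\ B w).
Proof.
  intros HA HB.
  pose (C := fun n : nat => match n with O => fun w => ~ A w | _ => fun w => ~ B w end).
  apply (meas_ext P (fun w => ~ exists n, C n w)).
  - intro w; split.
    + intro H. split; apply NNPP; intro H'; apply H; [exists O | exists 1%nat]; exact H'.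
    + intros [H1 H2] [n Hn]. destruct n; simpl in Hn; auto.
  - apply meas_compl, meas_union. intros [|n]; simpl; apply meas_compl; auto.
Qed.

Lemma meas_neg (A : Om P -> Prop) : meas P A -> meas P (fun w => ~ A w).
Proof. apply meas_compl. Qed.

Lemma indic_meas (A : Om P -> Prop) : meas P A -> measurable (indic A).
Proof.
  intros HA a. unfold indic.
  destruct (Rle_dec 1 a).
  - apply (meas_ext P (fun _ => True)); [|apply meas_full].
    intro w; destruct excluded_middle_informative; split; intros; auto; lra.
  - destruct (Rle_dec 0 a).
    + apply (meas_ext P (fun w => ~ A w)); [|apply meas_compl; auto].
      intro w; destruct excluded_middle_informative; split; intros; auto; try lra; tauto.
    + apply (meas_ext P (fun _ => False)); [|apply meas_empty].
      intro w; destruct excluded_middle_informative; split; intros; auto; try lra; tauto.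
Qed.

End Meas.

Section Gen.
Variable P : ProbSpace.
Variable E : L0Module P.

Definition agree (A : Om P -> Prop) (x y : E) := restr E A x = restr E A y.

Lemma restr_ext (A B : Om P -> Prop) (x : E) : (forall w, A w <-> B w) -> restr E A x = restr E B x.
Proof. intro H. assert (A = B) by (apply seq_eq; exact H). subst; auto. Qed.

Lemma restr_restr (A B : Om P -> Prop) (x : E) : meas P A -> meas P B ->
  restr E A (restr E B x) = restr E (fun w => A w /\ B w) x.
Proof.
  intros HA HB. unfold restr. rewrite smul_mul by (apply indic_meas; auto).
  f_equal. apply functional_extensionality; intro w. unfold indic.
  repeat destruct excluded_middle_informative; try tauto; lra.
Qed.

Lemma smul_zero (x : E) : smul E (fun _ => 0) x = mzero E.
Proof.
  assert (Hm : measurable (fun _ : Om P => 0)).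
  { intro a. destruct (Rle_dec 0 a).
    - apply (meas_ext P (fun _ => True)); [|apply meas_full]. intro; split; auto; lra.
    - apply (meas_ext P (fun _ => False)); [|apply meas_empty]. intro; split; try tauto; lra. }
  pose (a := smul E (fun _ => 0) x).
  assert (H : a = madd E a a).
  { unfold a. rewrite <- smul_addl by auto. f_equal. apply functional_extensionality; intro; lra. }
  fold a.
  assert (H0 : madd E (mopp E a) (madd E a a) = madd E (mopp E a) a) by (rewrite <- H; reflexivity).
  rewrite madd_assoc, madd_opp, madd_zero in H0. exact H0.
Qed.

Lemma agree_empty (A : Om P -> Prop) (x y : E) : (forall w, ~ A w) -> agree A x y.
Proof.
  intro H. unfold agree, restr.
  assert (indic A = fun _ => 0).
  { apply functional_extensionality; intro w; unfold indic; destruct excluded_middle_informative; firstorder. }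
  rewrite H0, !smul_zero; auto.
Qed.

Lemma restr_full (A : Om P -> Prop) (x : E) : (forall w, A w) -> restr E A x = x.
Proof.
  intro H. unfold restr.
  assert (indic A = fun _ => 1).
  { apply functional_extensionality; intro w; unfold indic; destruct excluded_middle_informative; firstorder. }
  rewrite H0; apply smul_one.
Qed.

Lemma agree_sub (A B : Om P -> Prop) (x y : E) : meas P A -> meas P B -> (forall w, B w -> A w) ->
  agree A x y -> agree B x y.
Proof.
  intros HA HB Hs H. unfold agree in *.
  rewrite (restr_ext B (fun w => B w /\ A w) x) by firstorder.
  rewrite (restr_ext B (fun w => B w /\ A w) y) by firstorder.
  rewrite <- !restr_restr by auto. rewrite H; auto.
Qed.

Lemma agree_refl A x : agree A x x. Proof. reflexivity. Qed.
Lemma agree_sym A x y : agree A x y -> agree A y x. Proof. unfold agree; auto. Qed.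
Lemma agree_trans A x y z : agree A x y -> agree A y z -> agree A x z.
Proof. unfold agree; intros; congruence. Qed.

Hypothesis HE : stable_module E.

Lemma ext_part (C : nat -> Om P -> Prop) (x y : E) : partition C -> (forall m, agree (C m) x y) -> x = y.
Proof.
  intros HC H. destruct (HE C HC (fun _ => y)) as [z [Hz Hu]].
  rewrite (Hu x H). symmetry. apply Hu. intro k; reflexivity.
Qed.

Lemma agree_glue (C : nat -> Om P -> Prop) (A : Om P -> Prop) (x y : E) : partition C -> meas P A ->
  (forall m, agree (fun w => A w /\ C m w) x y) -> agree A x y.
Proof.
  intros HC HA H. unfold agree. apply (ext_part C); auto. intro m. unfold agree.
  destruct HC as [Hm _].
  rewrite !restr_restr by auto.
  rewrite (restr_ext _ (fun w => A w /\ C m w) x) by firstorder.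
  rewrite (restr_ext _ (fun w => A w /\ C m w) y) by firstorder.
  apply H.
Qed.

Lemma concat_exists (A : nat -> Om P -> Prop) (xs : nat -> E) : partition A ->
  exists x, forall k, agree (A k) x (xs k).
Proof. intro HA. destruct (HE A HA xs) as [x [H _]]. exists x; exact H. Qed.

End Gen.

Arguments agree {P} E A x y.

Section Sets.
Variable P : ProbSpace.
Variable E : L0Module P.

Lemma concat_iff (A : nat -> Om P -> Prop) (Ys : nat -> E -> Prop) x :
  concat_sets E A Ys x <-> forall k, exists y, Ys k y /\ agree E (A k) x y.
Proof.
  split.
  - intros [ys [H1 H2]] k. exists (ys k); split; auto. apply H2.
  - intro H. destruct (fchoice _ H) as [f Hf]. exists f; split; intro k; apply Hf.
Qed.

Lemma stable_mem (G : E -> Prop) (A : nat -> Om P -> Prop) x : stable_set E G -> partition A ->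
  (forall k, exists y, G y /\ agree E (A k) x y) -> G x.
Proof.
  intros [_ HG] HA H. destruct (fchoice _ H) as [f Hf].
  apply (HG A HA f); [intro k; apply Hf | intro k; apply Hf].
Qed.

Lemma concat_mono (A : nat -> Om P -> Prop) (Ys Zs : nat -> E -> Prop) :
  (forall k, subset (Ys k) (Zs k)) -> subset (concat_sets E A Ys) (concat_sets E A Zs).
Proof.
  intros H x Hx. rewrite concat_iff in *. intro k. destruct (Hx k) as [y [Hy Ha]].
  exists y; split; auto. apply H; auto.
Qed.

Lemma concat_sub_stable (A : nat -> Om P -> Prop) (Ys : nat -> E -> Prop) G :
  partition A -> stable_set E G -> (forall k, subset (Ys k) G) -> subset (concat_sets E A Ys) G.
Proof.
  intros HA HG H x Hx. rewrite concat_iff in Hx. apply (stable_mem G A); auto.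
  intro k. destruct (Hx k) as [y [Hy Ha]]. exists y; split; auto. apply (H k); auto.
Qed.

Hypothesis HE : stable_module E.

Lemma concat_stable (A : nat -> Om P -> Prop) (Ys : nat -> E -> Prop) :
  partition A -> (forall k, stable_set E (Ys k)) -> stable_set E (concat_sets E A Ys).
Proof.
  intros HA HY. split.
  - assert (H : forall k, exists y, Ys k y) by (intro k; apply (HY k)).
    destruct (fchoice _ H) as [f Hf].
    destruct (concat_exists P E HE A f HA) as [x Hx].
    exists x. exists f; split; auto.
  - intros B HB ys Hys x Hx. rewrite concat_iff. intro k.
    assert (H : forall m, exists g, Ys k g /\ agree E (A k) (ys m) g).
    { intro m. specialize (Hys m). rewrite concat_iff in Hys. apply Hys. }
    destruct (fchoice _ H) as [g Hg].
    destruct (concat_exists P E HE B g HB) as [z Hz].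
    exists z. split.
    + apply (stable_mem (Ys k) B); auto. intro m. exists (g m); split; [apply Hg | apply Hz].
    + pose proof (proj1 HA) as HAm. pose proof (proj1 HB) as HBm.
      apply (agree_glue P E HE B); auto. intro m.
      apply (agree_trans P E _ _ (ys m)).
      { apply (agree_sub P E (B m)); auto. apply meas_inter; auto. intros w Hw; tauto. apply Hx. }
      apply (agree_trans P E _ _ (g m)).
      { apply (agree_sub P E (A k)); auto. apply meas_inter; auto. intros w Hw; tauto. apply Hg. }
      apply agree_sym. apply (agree_sub P E (B m)); auto. apply meas_inter; auto. intros w Hw; tauto. all: try apply Hz.
Qed.

End Sets.
Section Parts.
Variable P : ProbSpace.

Definition part1 : nat -> Om P -> Prop := fun n => match n with O => fun _ => True | _ => fun _ => False end.
Definition part2 (A : Om P -> Prop) : nat -> Om P -> Prop :=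
  fun n => match n with O => A | 1%nat => fun w => ~ A w | _ => fun _ => False end.
Definition pairp (A : nat -> Om P -> Prop) (A' : nat -> nat -> Om P -> Prop) : nat -> Om P -> Prop :=
  fun n w => A (fst (of_nat n)) w /\ A' (fst (of_nat n)) (snd (of_nat n)) w.

Lemma part1_ok : partition part1.
Proof.
  split; [|split].
  - intros [|k]; simpl; [apply meas_full | apply meas_empty].
  - intros [|m] [|n] Hmn w; simpl; tauto.
  - intro w; exists O; simpl; auto.
Qed.

Lemma part2_ok A : meas P A -> partition (part2 A).
Proof.
  intro HA. split; [|split].
  - intros [|[|k]]; simpl; auto using meas_empty, meas_compl.
  - intros [|[|m]] [|[|n]] Hmn w; simpl; tauto.
  - intro w; destruct (classic (A w)); [exists O | exists 1%nat]; simpl; auto.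
Qed.

Lemma pairp_ok A A' : partition A -> (forall k, partition (A' k)) -> partition (pairp A A').
Proof.
  intros [Am [Ad Ac]] HA'. split; [|split].
  - intro n. unfold pairp. apply meas_inter; auto. apply (HA' _).
  - intros m n Hmn w [H1 H2] [H3 H4].
    destruct (of_nat m) as [k l] eqn:Em. destruct (of_nat n) as [k' l'] eqn:En. simpl in *.
    destruct (Nat.eq_dec k k') as [e|e].
    + subst k'. destruct (Nat.eq_dec l l') as [e'|e'].
      * subst l'. apply Hmn. rewrite <- (cancel_to_of m), <- (cancel_to_of n), Em, En; auto.
      * destruct (HA' k) as [_ [Hd _]]. apply (Hd l l' e' w); auto.
    + apply (Ad k k' e w); auto.
  - intro w. destruct (Ac w) as [k Hk]. destruct (HA' k) as [_ [_ Hc]]. destruct (Hc w) as [l Hl].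
    exists (to_nat (k, l)). unfold pairp. rewrite cancel_of_to. simpl; auto.
Qed.

End Parts.
Arguments part1 {P}.

Section Sets2.
Variable P : ProbSpace.
Variable E : L0Module P.
Hypothesis HE : stable_module E.

Lemma glue2 (A : Om P -> Prop) (x y : E) : meas P A -> exists z, agree E A z x /\ agree E (fun w => ~ A w) z y.
Proof.
  intro HA. destruct (concat_exists P E HE (part2 P A) (fun n => match n with O => x | _ => y end) (part2_ok P A HA)) as [z Hz].
  exists z; split; [apply (Hz O) | apply (Hz 1%nat)].
Qed.

Lemma stable_mem2 (G : E -> Prop) (A : Om P -> Prop) (x y z : E) : meas P A -> stable_set E G -> G x -> G y ->
  agree E A z x -> agree E (fun w => ~ A w) z y -> G z.
Proof.
  intros HA HG Gx Gy H1 H2. apply (stable_mem P E G (part2 P A)); auto using part2_ok.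
  intros [|[|k]]; [exists x | exists y | exists x]; split; auto.
  apply agree_empty. simpl; auto.
Qed.

Lemma concat_concat (A : nat -> Om P -> Prop) (A' : nat -> nat -> Om P -> Prop) (Gs : nat -> nat -> E -> Prop) :
  partition A -> (forall k, partition (A' k)) ->
  set_eq (concat_sets E A (fun k => concat_sets E (A' k) (Gs k)))
         (concat_sets E (pairp P A A') (fun n => Gs (fst (of_nat n)) (snd (of_nat n)))).
Proof.
  intros HA HA' x. rewrite !concat_iff. split.
  - intros H n. destruct (of_nat n) as [k l] eqn:En. simpl.
    destruct (H k) as [z [Hz Ha]]. rewrite concat_iff in Hz. destruct (Hz l) as [g [Hg Hga]].
    exists g; split; auto. unfold pairp; rewrite En; simpl.
    pose proof (proj1 HA k). pose proof (proj1 (HA' k) l).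
    apply (agree_trans P E _ _ z).
    + apply (agree_sub P E (A k)); auto. apply meas_inter; auto. intros w Hw; tauto.
    + apply (agree_sub P E (A' k l)); auto. apply meas_inter; auto. intros w Hw; tauto.
  - intros H k. destruct (fchoice _ H) as [g Hg].
    destruct (concat_exists P E HE (A' k) (fun l => g (to_nat (k, l))) (HA' k)) as [z Hz].
    exists z. split.
    + rewrite concat_iff. intro l. exists (g (to_nat (k, l))). split; [|apply Hz].
      pose proof (proj1 (Hg (to_nat (k, l)))) as Hg1. rewrite cancel_of_to in Hg1. exact Hg1.
    + pose proof (proj1 HA k). apply (agree_glue P E HE (A' k)); auto. intro l.
      pose proof (proj1 (HA' k) l).
      pose proof (proj2 (Hg (to_nat (k, l)))) as Hg2. unfold pairp in Hg2. rewrite cancel_of_to in Hg2. simpl in Hg2.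
      apply (agree_trans P E _ _ (g (to_nat (k, l)))); auto.
      apply agree_sym. apply (agree_sub P E (A' k l)); auto. apply meas_inter; auto. intros w Hw; tauto.
      all: try apply Hz.
Qed.

Lemma concat_sub_via (C A : nat -> Om P -> Prop) (f : nat -> nat) (Hs Gs : nat -> E -> Prop) :
  partition C -> partition A -> (forall n w, C n w -> A (f n) w) -> (forall n, subset (Hs n) (Gs (f n))) ->
  (forall k, stable_set E (Gs k)) -> subset (concat_sets E C Hs) (concat_sets E A Gs).
Proof.
  intros HC HA HCA HHG HG x Hx. rewrite concat_iff in *. intro k.
  destruct (fchoice _ Hx) as [h Hh].
  destruct (proj1 (HG k)) as [g0 Hg0].
  pose (ys := fun n => if Nat.eq_dec (f n) k then h n else g0).
  destruct (concat_exists P E HE C ys HC) as [y Hy].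
  exists y. split.
  - apply (stable_mem P E (Gs k) C); auto. intro n. exists (ys n). split; [|apply Hy].
    unfold ys; destruct Nat.eq_dec; auto. subst k. apply HHG. apply Hh.
  - pose proof (proj1 HA k). apply (agree_glue P E HE C); auto. intro n.
    pose proof (proj1 HC n).
    destruct (Nat.eq_dec (f n) k) as [e|e].
    + apply (agree_trans P E _ _ (h n)).
      * apply (agree_sub P E (C n)); auto. apply meas_inter; auto. intros w Hw; tauto. apply Hh.
      * apply agree_sym. apply (agree_sub P E (C n)); auto. apply meas_inter; auto. intros w Hw; tauto.
        specialize (Hy n). unfold ys in Hy. destruct Nat.eq_dec; [exact Hy | contradiction].
    + apply agree_empty. intros w [H1 H2]. apply HCA in H2. destruct HA as [_ [Hd _]].
      apply (Hd (f n) k e w); auto.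
Qed.

Lemma concat_const (A : nat -> Om P -> Prop) (G : E -> Prop) : partition A -> stable_set E G ->
  set_eq (concat_sets E A (fun _ => G)) G.
Proof.
  intros HA HG x; split.
  - apply (concat_sub_stable P E A); auto. intros k y Hy; auto.
  - intro Hx. rewrite concat_iff. intro k. exists x; split; auto. apply agree_refl.
Qed.

End Sets2.
Section SF.
Variable P : ProbSpace.
Variable E : L0Module P.
Variable S : E -> Prop.

Lemma sf_sub F G : stable_filter E S F -> F G -> subset G S.
Proof. intros [[H _] _]; apply H. Qed.

Lemma sf_S F : stable_filter E S F -> F S.
Proof. intros [[_ [[G [HG He]] _]] _]. rewrite <- (seq_eq _ _ He); auto. Qed.

Lemma sf_ne F G : stable_filter E S F -> F G -> exists x, G x.
Proof. intros [[_ [_ [H _]]] _]; apply H. Qed.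

Lemma sf_inter F G1 G2 : stable_filter E S F -> F G1 -> F G2 -> F (fun x => G1 x /\ G2 x).
Proof. intros [[_ [_ [_ [H _]]]] _] H1 H2. destruct (H G1 G2 H1 H2) as [G [HG He]]. rewrite <- (seq_eq _ _ He); auto. Qed.

Lemma sf_up F G H : stable_filter E S F -> F G -> subset G H -> subset H S -> F H.
Proof. intros [[_ [_ [_ [_ Hu]]]] _]; apply Hu. Qed.

Lemma sf_base F G : stable_filter E S F -> F G -> exists H, stable_set E H /\ F H /\ subset H G.
Proof.
  intros [_ [FB [[Hb1 Hb2] [_ [Hs _]]]]] HG. destruct (Hb2 G HG) as [H [HH Hsub]].
  exists H; auto.
Qed.

Lemma sf_concat F (A : nat -> Om P -> Prop) (Gs : nat -> E -> Prop) : stable_filter E S F -> partition A ->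
  (forall k, F (Gs k)) -> exists Z, F Z /\ subset Z (concat_sets E A Gs).
Proof.
  intros HF HA HG. destruct HF as [HF1 [FB [[Hb1 Hb2] [_ [Hs Hc]]]]].
  assert (H : forall k, exists H, FB H /\ subset H (Gs k)) by (intro k; apply Hb2; auto).
  destruct (fchoice _ H) as [h Hh].
  destruct (Hc A HA h (fun k => proj1 (Hh k))) as [Z [HZ HZe]].
  exists Z; split; auto. intros x Hx. apply HZe in Hx.
  apply (concat_mono P E A h Gs); auto. intro k; apply Hh.
Qed.

End SF.

Section Max.
Variable P : ProbSpace.
Variable E : L0Module P.
Hypothesis HE : stable_module E.
Variable S : E -> Prop.
Hypothesis HS : stable_set E S.

Definition Gam (Phi : ((E -> Prop) -> Prop) -> Prop) (G : E -> Prop) :=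
  stable_set E G /\ exists F, Phi F /\ F G.
Definition FBs Phi (Z : E -> Prop) := exists A Gs, partition A /\ (forall k, Gam Phi (Gs k)) /\ Z = concat_sets E A Gs.
Definition Fs Phi (H : E -> Prop) := subset H S /\ exists Z, FBs Phi Z /\ subset Z H.

Lemma FBs_sub Phi Z : (forall F, Phi F -> stable_filter E S F) -> FBs Phi Z -> subset Z S.
Proof.
  intros HPhi [A [Gs [HA [HG ->]]]]. apply (concat_sub_stable P E A); auto.
  intro k. destruct (HG k) as [_ [F [HF HFG]]]. apply (sf_sub P E S F); auto.
Qed.

Lemma chain_ub (Phi : ((E -> Prop) -> Prop) -> Prop) :
  (exists F, Phi F) -> (forall F, Phi F -> stable_filter E S F) ->
  (forall F1 F2, Phi F1 -> Phi F2 -> (forall G, F1 G -> F2 G) \/ (forall G, F2 G -> F1 G)) ->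
  stable_filter E S (Fs Phi) /\ forall F, Phi F -> forall G, F G -> Fs Phi G.
Proof.
  intros [F1 HF1] HPhi Htot.
  assert (Hup : forall F, Phi F -> forall G, F G -> Fs Phi G).
  { intros F HF G HG. split. apply (sf_sub P E S F); auto.
    destruct (sf_base P E S F G (HPhi F HF) HG) as [H [Hst [HFH HHG]]].
    exists (concat_sets E part1 (fun _ => H)). split.
    - exists part1, (fun _ => H). split; [apply part1_ok|]. split; auto. intro k; split; auto. exists F; auto.
    - intros x Hx. apply HHG. apply (concat_const P E part1 H (part1_ok P) Hst); auto. }
  assert (Hsub := FBs_sub Phi).
  assert (HFBst : forall Z, FBs Phi Z -> stable_set E Z).
  { intros Z [A [Gs [HA [HG ->]]]]. apply concat_stable; auto. intro k; apply HG. }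
  assert (HSin : Fs Phi S) by (apply (Hup F1); auto; apply (sf_S P E S F1); auto).
  split; [split|]; auto.
  -
    split; [intros G [HG _]; auto|]. split; [exists S; split; auto; intro; tauto|]. split.
    { intros G [_ [Z [HZ HZG]]]. destruct (proj1 (HFBst Z HZ)) as [x Hx]. exists x; auto. }
    split.
    + intros H1 H2 [HS1 [Z1 [[A [Gs [HA [HG ->]]]] HZ1]]] [HS2 [Z2 [[A' [Gs' [HA' [HG' ->]]]] HZ2]]].
      exists (fun x => H1 x /\ H2 x). split; [|intro; tauto].
      assert (Hh : forall n : nat, exists h, Gam Phi h /\ subset h (Gs (fst (of_nat n))) /\ subset h (Gs' (snd (of_nat n)))).
      { intro n. destruct (HG (fst (of_nat n))) as [_ [Fa [HFa Ha]]]. destruct (HG' (snd (of_nat n))) as [_ [Fb [HFb Hb]]].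
        assert (Hboth : exists F, Phi F /\ F (Gs (fst (of_nat n))) /\ F (Gs' (snd (of_nat n)))).
        { destruct (Htot Fa Fb HFa HFb) as [Hab|Hba]; [exists Fb | exists Fa]; auto. }
        destruct Hboth as [F [HF [Fa' Fb']]].
        destruct (sf_base P E S F _ (HPhi F HF) (sf_inter P E S F _ _ (HPhi F HF) Fa' Fb')) as [h [Hst [HFh Hhs]]].
        exists h. split; [split; auto; exists F; auto|]. split; intros x Hx; apply Hhs in Hx; tauto. }
      destruct (fchoice _ Hh) as [h Hhp].
      split; [intros x [Hx _]; auto|].
      exists (concat_sets E (pairp P A (fun _ => A')) h). split.
      * exists (pairp P A (fun _ => A')), h. split; [apply pairp_ok; auto|]. split; auto. intro n; apply Hhp.
      * intros x Hx. split.
        -- apply HZ1. apply (concat_sub_via P E HE (pairp P A (fun _ => A')) A (fun n => fst (of_nat n)) h Gs); auto.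
           apply pairp_ok; auto. intros n w [Hw _]; auto. intro n; apply Hhp. intro k; apply HG.
        -- apply HZ2. apply (concat_sub_via P E HE (pairp P A (fun _ => A')) A' (fun n => snd (of_nat n)) h Gs'); auto.
           apply pairp_ok; auto. intros n w [_ Hw]; auto. intro n; apply Hhp. intro k; apply HG'.
    + intros G H [HGS [Z [HZ HZG]]] HGH HHS. split; auto. exists Z; split; auto. intros x Hx; auto.
  -
    exists (FBs Phi). split; [split|].
    + intros Z HZ. split; [apply Hsub; auto|]. exists Z; split; auto. intros x Hx; auto.
    + intros G [_ [Z [HZ HZG]]]. exists Z; auto.
    + split; [|split].
      * destruct HSin as [_ [Z [HZ _]]]. exists Z; auto.
      * exact HFBst.
      * intros A HA Ys HYs.
        assert (Hc : forall k, exists p : (nat -> Om P -> Prop) * (nat -> E -> Prop),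
                   partition (fst p) /\ (forall l, Gam Phi (snd p l)) /\ Ys k = concat_sets E (fst p) (snd p)).
        { intro k. destruct (HYs k) as [A' [Gs [H1 [H2 H3]]]]. exists (A', Gs); auto. }
        destruct (fchoice _ Hc) as [p Hp].
        exists (concat_sets E (pairp P A (fun k => fst (p k))) (fun n => snd (p (fst (of_nat n))) (snd (of_nat n)))).
        split.
        -- eexists; eexists. split; [apply pairp_ok; [exact HA | intro k; apply Hp]|]. split; [|reflexivity].
           intro n. apply Hp.
        -- assert (HYe : Ys = fun k => concat_sets E (fst (p k)) (snd (p k))).
           { apply functional_extensionality; intro k; apply Hp. }
           rewrite HYe. intro x. symmetry.
           apply (concat_concat P E HE A (fun k => fst (p k)) (fun k => snd (p k))); auto.
           intro k; apply Hp.
Qed.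

End Max.
Section Max2.
Variable P : ProbSpace.
Variable E : L0Module P.
Hypothesis HE : stable_module E.
Variable S : E -> Prop.
Hypothesis HS : stable_set E S.

Lemma max_filter F0 : stable_filter E S F0 ->
  exists U, stable_filter E S U /\ (forall G, F0 G -> U G) /\
    forall F', stable_filter E S F' -> (forall G, U G -> F' G) -> forall G, F' G -> U G.
Proof.
  intro HF0.
  pose (T := {F : (E -> Prop) -> Prop | stable_filter E S F /\ forall G, F0 G -> F G}).
  pose (t0 := exist (fun F => stable_filter E S F /\ forall G, F0 G -> F G) F0 (conj HF0 (fun G H => H)) : T).
  destruct (ZW.myzorn T t0 (fun a b => forall G, proj1_sig a G -> proj1_sig b G)) as [t Ht].
  - intros t G; auto.
  - intros r s t H1 H2 G HG; auto.
  - intros A Htot.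
    pose (Phi := fun F => F = F0 \/ exists a, A a /\ F = proj1_sig a).
    assert (HPhi : forall F, Phi F -> stable_filter E S F /\ forall G, F0 G -> F G).
    { intros F [->|[a [_ ->]]]; [split; auto | apply (proj2_sig a)]. }
    destruct (chain_ub P E HE S HS Phi) as [Hs Hub].
    + exists F0; left; auto.
    + intros F HF; apply HPhi; auto.
    + intros F1 F2 [->|[a [Ha ->]]] [->|[b [Hb ->]]]; auto.
      * left. apply (proj2 (proj2_sig b)).
      * right. apply (proj2 (proj2_sig a)).
      * try (apply Htot; auto).
    + exists (exist (fun F => stable_filter E S F /\ forall G, F0 G -> F G) (Fs P E S Phi)
               (conj Hs (fun G HG => Hub F0 (or_introl eq_refl) G HG))).
      intros s Hs' G HG. simpl. apply (Hub (proj1_sig s)); auto. right; exists s; auto.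
  - exists (proj1_sig t). destruct (proj2_sig t) as [H1 H2]. split; auto. split; auto.
    intros F' HF' Hsub G HG.
    exact (Ht (exist _ F' (conj HF' (fun G HG => Hsub G (H2 G HG)))) Hsub G HG).
Qed.

End Max2.
Definition updF {I : Type} {X : I -> Type} (f : forall j, X j) (i : I) (a : X i) : forall j, X j :=
  fun j => match excluded_middle_informative (i = j) with
           | left e => eq_rect i X a j e | right _ => f j end.

Lemma updF_at {I : Type} {X : I -> Type} (f : forall j, X j) (i : I) (a : X i) : updF f i a i = a.
Proof.
  unfold updF. destruct excluded_middle_informative as [e|n]; [|contradiction].
  rewrite (proof_irrelevance _ e eq_refl). reflexivity.
Qed.

Lemma updF_ne {I : Type} {X : I -> Type} (f : forall j, X j) (i j : I) (a : X i) : i <> j -> updF f i a j = f j.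
Proof. intro n. unfold updF. destruct excluded_middle_informative; [contradiction|auto]. Qed.

Lemma updF_spec {I : Type} {X : I -> Type} (f : forall j, X j) (i : I) (a : X i) (Q : forall j, X j -> Prop) :
  Q i a -> (forall j, i <> j -> Q j (f j)) -> forall j, Q j (updF f i a j).
Proof.
  intros H1 H2 j. destruct (classic (i = j)) as [e|n].
  - subst j. rewrite updF_at; auto.
  - rewrite updF_ne; auto.
Qed.

Section Prod.
Variable P : ProbSpace.
Variable I : Type.
Variable E : I -> L0Module P.
Hypothesis HE : forall i, stable_module (E i).
Variable S : forall i, E i -> Prop.
Hypothesis HS : forall i, stable_set (E i) (S i).

Notation PM := (prodModule E).
Notation PS := (prodSet S).

Lemma agree_prod A (x y : PM) : agree PM A x y <-> forall i, agree (E i) A (x i) (y i).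
Proof.
  unfold agree; split.
  - intros H i. change (restr PM A x i = restr PM A y i). rewrite H; auto.
  - intro H. apply functional_extensionality_dep. exact H.
Qed.

Lemma prod_stable : stable_module PM.
Proof.
  intros A HA xs.
  assert (H : forall i, exists v, forall k, agree (E i) (A k) v (xs k i)).
  { intro i. apply (concat_exists P (E i) (HE i) A); auto. }
  destruct (dchoice _ H) as [x Hx].
  exists x. split.
  - intro k. apply agree_prod. intro i; apply Hx.
  - intros y Hy. apply functional_extensionality_dep; intro i.
    apply (ext_part P (E i) (HE i) A); auto. intro k.
    apply (agree_trans P (E i) _ _ (xs k i)); [|apply agree_sym, Hx].
    apply (agree_prod (A k) y (xs k)). apply Hy.
Qed.

Lemma prodS_stable : stable_set PM PS.
Proof.
  split.
  - assert (H : forall i, exists v, S i v) by (intro i; apply (HS i)).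
    destruct (dchoice _ H) as [x Hx]. exists x; exact Hx.
  - intros A HA ys Hys x Hx i. apply (stable_mem P (E i) (S i) A); auto.
    intro k. exists (ys k i). split; [apply Hys|]. apply (agree_prod (A k) x (ys k)). apply Hx.
Qed.

End Prod.
Section Easy.
Variable P : ProbSpace.
Variable I : Type.
Variable E : I -> L0Module P.
Hypothesis HE : forall i, stable_module (E i).
Variable S : forall i, E i -> Prop.
Hypothesis HS : forall i, stable_set (E i) (S i).
Variable T : forall i, (E i -> Prop) -> Prop.
Hypothesis HT : forall i, is_topology (S i) (T i).
Variable B : forall i, (E i -> Prop) -> Prop.
Hypothesis HB : forall i, is_base (T i) (B i).

Notation PM := (prodModule E).
Notation PS := (prodSet S).

Lemma easy_dir : stable_compact PM PS (prodTop S B) -> forall i, stable_compact (E i) (S i) (T i).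
Proof.
  intros Hc i F HF.
  destruct (proj1 (prodS_stable P I E S HS)) as [s Hs].
  pose (Fh := fun H : PM -> Prop => subset H PS /\ exists G, F G /\ forall z, PS z -> G (z i) -> H z).
  assert (Hne : forall G, F G -> exists z, PS z /\ G (z i)).
  { intros G HG. destruct (sf_ne P (E i) (S i) F G HF HG) as [g Hg].
    exists (updF s i g). split.
    - intro j. apply (updF_spec (X := fun j => E j) s i g (fun j v => S j v)); [apply (sf_sub P (E i) (S i) F G HF HG); auto | intros j' _; apply Hs].
    - rewrite (updF_at (X := fun j => E j)); auto. }
  assert (HFh : stable_filter PM PS Fh).
  { split; [split; [|split; [|split; [|split]]]|].
    - intros H [HH _]; auto.
    - exists PS. split; [|intro; tauto]. split; [intros z Hz; auto|].
      exists (S i). split; [apply (sf_S P (E i) (S i) F HF)|]. auto.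
    - intros H [_ [G [HG HGH]]]. destruct (Hne G HG) as [z [Hz1 Hz2]]. exists z; auto.
    - intros H1 H2 [HS1 [G1 [HG1 H1']]] [HS2 [G2 [HG2 H2']]].
      exists (fun z => H1 z /\ H2 z). split; [|intro; tauto]. split; [intros z [Hz _]; auto|].
      exists (fun v => G1 v /\ G2 v). split; [apply (sf_inter P (E i) (S i)); auto|].
      intros z Hz [Ha Hb]; auto.
    - intros G H [HGS [G' [HG' HG'G]]] HGH HHS. split; auto. exists G'; split; auto.
    - exists (fun Y => exists G, stable_set (E i) G /\ F G /\ Y = fun z => PS z /\ G (z i)).
      split; [split|split; [|split]].
      + intros Y [G [HGs [HG ->]]]. split; [intros z [Hz _]; auto|]. exists G; split; auto.
      + intros H [HHS [G [HG HGH]]].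
        destruct (sf_base P (E i) (S i) F G HF HG) as [G' [HG's [HG'F HG'G]]].
        exists (fun z => PS z /\ G' (z i)). split; [exists G'; auto|].
        intros z [Hz1 Hz2]; auto.
      + destruct (sf_base P (E i) (S i) F (S i) HF (sf_S P (E i) (S i) F HF)) as [G' [HG's [HG'F _]]].
        exists (fun z => PS z /\ G' (z i)). exists G'; auto.
      + intros Y [G [HGs [HG ->]]]. split.
        * destruct (Hne G HG) as [z Hz]. exists z; auto.
        * intros A HA ys Hys x Hx. split.
          -- apply (stable_mem P PM PS A); auto. apply prodS_stable; auto.
             intro k. exists (ys k); split; [apply Hys | apply Hx].
          -- apply (stable_mem P (E i) G A); auto. intro k. exists (ys k i); split; [apply Hys|].
             apply (agree_prod P I E (A k) x (ys k)). apply Hx.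
      + intros A HA Ys HYs.
        assert (Hcc : forall k, exists G, stable_set (E i) G /\ F G /\ Ys k = fun z => PS z /\ G (z i)) by (intro k; apply HYs).
        destruct (fchoice _ Hcc) as [Gs HGs].
        assert (HGst : stable_set (E i) (concat_sets (E i) A Gs)).
        { apply concat_stable; auto. intro k; apply HGs. }
        assert (HGF : F (concat_sets (E i) A Gs)).
        { destruct (sf_concat P (E i) (S i) F A Gs HF HA) as [Z [HZ HZs]]. intro k; apply HGs.
          apply (sf_up P (E i) (S i) F Z); auto.
          apply (concat_sub_stable P (E i) A); auto. intro k. apply (sf_sub P (E i) (S i) F); auto. apply HGs. }
        exists (fun z => PS z /\ concat_sets (E i) A Gs (z i)). split; [exists (concat_sets (E i) A Gs); auto|].
        assert (HYe : Ys = fun k z => PS z /\ Gs k (z i)).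
        { apply functional_extensionality; intro k; apply HGs. }
        rewrite HYe. intro z. rewrite (concat_iff P PM A). split.
        * intros [Hz1 Hz2] k. rewrite concat_iff in Hz2. destruct (Hz2 k) as [g [Hg Hga]].
          exists (updF z i g). split; [split|].
          -- intro j. apply (updF_spec (X := fun j => E j) z i g (fun j v => S j v)); [|intros j' _; apply Hz1]. apply (sf_sub P (E i) (S i) F (Gs k)); auto. apply HGs.
          -- rewrite (updF_at (X := fun j => E j)); auto.
          -- apply agree_prod. intro j. apply (updF_spec (X := fun j => E j) z i g (fun j v => agree (E j) (A k) (z j) v)); auto.
             intros j' _. apply agree_refl.
        * intro H. split.
          -- apply (stable_mem P PM PS A); auto. apply prodS_stable; auto.
             intro k. destruct (H k) as [y [[Hy1 Hy2] Hya]]. exists y; auto.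
          -- rewrite concat_iff. intro k. destruct (H k) as [y [[Hy1 Hy2] Hya]].
             exists (y i). split; auto. apply (agree_prod P I E (A k) z y). auto. }
  destruct (Hc Fh HFh) as [x [Hx Hcl]].
  exists (x i). split; [apply Hx|].
  intros O HO HOx G HG.
  pose (O' := fun z : PM => PS z /\ O (z i)).
  assert (HO' : prodTop S B O').
  { split; [intros z [Hz _]; auto|].
    intros z [Hz1 Hz2].
    destruct (proj2 (HB i) O HO (z i) Hz2) as [W [HW [HWz HWO]]].
    assert (HWS : subset W (S i)).
    { intros v Hv. apply (proj1 (HT i) O HO). apply HWO; auto. }
    pose (Uk := updF (X := fun j => E j -> Prop) S i W).
    assert (HUk : forall j, forall v : E j, Uk j v -> S j v).
    { apply (updF_spec (X := fun j => E j -> Prop) S i W (fun j A => forall v, A v -> S j v)); auto. }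
    exists (concat_sets PM part1 (fun _ y => forall j, Uk j (y j))). split; [|split].
    - exists part1, (fun _ => cons i nil), (fun _ => Uk). split; [apply part1_ok|]. split; [|split].
      + intros k j [e|[]]. subst j. unfold Uk. rewrite updF_at; auto.
      + intros k j Hn. unfold Uk. rewrite updF_ne. intro; tauto. intro e; apply Hn; left; auto.
      + intro; tauto.
    - rewrite concat_iff. intro k. exists z. split; [|apply agree_refl].
      apply (updF_spec (X := fun j => E j -> Prop) S i W (fun j A => A (z j))); [exact HWz | intros j' _; apply Hz1].
    - intros v Hv. rewrite concat_iff in Hv. destruct (Hv 0%nat) as [y [Hy Hya]].
      unfold agree in Hya. rewrite !restr_full in Hya by (intro; simpl; trivial).
      subst y. split.
      + intro j. apply HUk, Hy.
      + apply HWO. specialize (Hy i). unfold Uk in Hy. rewrite updF_at in Hy. auto. }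
  destruct (Hcl O' HO' (conj Hx HOx) (fun z => PS z /\ G (z i))) as [y [[_ Hy1] [_ Hy2]]].
  - split; [intros z [Hz _]; auto|]. exists G; split; auto.
  - exists (y i); auto.
Qed.

End Easy.
Section Hard.
Variable P : ProbSpace.
Variable I : Type.
Variable E : I -> L0Module P.
Hypothesis HE : forall i, stable_module (E i).
Variable S : forall i, E i -> Prop.
Hypothesis HS : forall i, stable_set (E i) (S i).
Variable T : forall i, (E i -> Prop) -> Prop.
Hypothesis HT : forall i, is_topology (S i) (T i).
Variable B : forall i, (E i -> Prop) -> Prop.
Hypothesis HB : forall i, is_base (T i) (B i).
Hypothesis HBs : forall i, stable_coll (E i) (B i).

Notation PM := (prodModule E).
Notation PS := (prodSet S).

Lemma B_sub i W : B i W -> subset W (S i).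
Proof. intros HW. apply (proj1 (HT i)). apply (proj1 (HB i)); auto. Qed.

Lemma B_stable i W : B i W -> stable_set (E i) W.
Proof. intro HW. apply (proj1 (proj2 (HBs i))); auto. Qed.

Lemma B_nbhd i v : S i v -> exists W, B i W /\ W v.
Proof.
  intro Hv. destruct (HT i) as [_ [[U0 [HU0 HU0e]] _]].
  destruct (proj2 (HB i) U0 HU0 v) as [W [HW [HWv _]]]. apply HU0e; auto.
  exists W; auto.
Qed.

Lemma B_inter i v W1 W2 : B i W1 -> B i W2 -> W1 v -> W2 v -> exists W, B i W /\ W v /\ subset W (fun u => W1 u /\ W2 u).
Proof.
  intros H1 H2 Hv1 Hv2. destruct (HT i) as [_ [_ [_ [_ [Hint _]]]]].
  destruct (Hint W1 W2) as [V [HV HVe]]; try (apply (proj1 (HB i)); auto).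
  destruct (proj2 (HB i) V HV v) as [W [HW [HWv HWV]]]. apply HVe; auto.
  exists W; split; auto. split; auto. intros u Hu. apply HVe. apply HWV; auto.
Qed.

Definition PU (U : (PM -> Prop) -> Prop) i (H : E i -> Prop) :=
  subset H (S i) /\ exists G, U G /\ forall g : PM, G g -> H (g i).

Lemma PMst : stable_module PM.
Proof. apply prod_stable; auto. Qed.
Lemma PSst : stable_set PM PS.
Proof. apply prodS_stable; auto. Qed.

Lemma concat_in U (A : nat -> Om P -> Prop) (Gs : nat -> PM -> Prop) : stable_filter PM PS U -> partition A ->
  (forall k, U (Gs k)) -> U (concat_sets PM A Gs).
Proof.
  intros HU HA HG. destruct (sf_concat P PM PS U A Gs HU HA HG) as [Z [HZ HZs]].
  apply (sf_up P PM PS U Z); auto. apply (concat_sub_stable P PM A); auto. apply PSst.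
  intro k. apply (sf_sub P PM PS U); auto.
Qed.

Lemma proj_filter U i : stable_filter PM PS U -> stable_filter (E i) (S i) (PU U i).
Proof.
  intro HU.
  pose (img := fun (G : PM -> Prop) (y : E i) => exists g, G g /\ g i = y).
  assert (HimgS : forall G, U G -> subset (img G) (S i)).
  { intros G HG y [g [Hg <-]]. apply (sf_sub P PM PS U G HU HG); auto. }
  assert (Himg : forall G, U G -> PU U i (img G)).
  { intros G HG. split; auto. exists G; split; auto. intros g Hg; exists g; auto. }
  assert (Himgst : forall G, stable_set PM G -> stable_set (E i) (img G)).
  { intros G HGs. split.
    - destruct (proj1 HGs) as [g Hg]. exists (g i), g; auto.
    - intros A HA ys Hys x Hx.
      destruct (fchoice _ Hys) as [g Hg].
      destruct (concat_exists P PM PMst A g HA) as [z Hz].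
      exists z. split.
      + apply (stable_mem P PM G A); auto. intro k; exists (g k); split; [apply Hg | apply Hz].
      + apply (ext_part P (E i) (HE i) A); auto. intro k.
        apply (agree_trans P (E i) _ _ (g k i)).
        * apply (agree_prod P I E (A k) z (g k)). apply Hz.
        * destruct (Hg k) as [_ ->]. apply agree_sym. apply Hx. }
  split; [split; [|split; [|split; [|split]]]|].
  - intros H [HH _]; auto.
  - exists (S i). split; [|intro; tauto]. split; [intros v; auto|]. exists PS.
    split; [apply (sf_S P PM PS U HU)|]. intros g Hg; apply Hg.
  - intros H [_ [G [HG HGH]]]. destruct (sf_ne P PM PS U G HU HG) as [g Hg]. exists (g i); auto.
  - intros H1 H2 [HS1 [G1 [HG1 H1']]] [HS2 [G2 [HG2 H2']]].
    exists (fun v => H1 v /\ H2 v). split; [|intro; tauto]. split; [intros v [Hv _]; auto|].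
    exists (fun g => G1 g /\ G2 g). split; [apply (sf_inter P PM PS); auto|]. intros g [Ha Hb]; auto.
  - intros G H [HGS [G' [HG' HG'G]]] HGH HHS. split; auto. exists G'; split; auto.
  - exists (fun Y => exists G, stable_set PM G /\ U G /\ Y = img G).
    split; [split|split; [|split]].
    + intros Y [G [_ [HG ->]]]. auto.
    + intros H [HHS [G [HG HGH]]].
      destruct (sf_base P PM PS U G HU HG) as [G' [HG's [HG'U HG'G]]].
      exists (img G'). split; [exists G'; auto|]. intros y [g [Hg <-]]. apply HGH. apply HG'G; auto.
    + destruct (sf_base P PM PS U PS HU (sf_S P PM PS U HU)) as [G' [HG's [HG'U _]]].
      exists (img G'), G'; auto.
    + intros Y [G [HGs [_ ->]]]. auto.
    + intros A HA Ys HYs.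
      destruct (fchoice _ HYs) as [Gs HGs].
      exists (img (concat_sets PM A Gs)). split.
      * exists (concat_sets PM A Gs). split; [|split; auto].
        -- apply concat_stable; auto. apply PMst. intro k; apply HGs.
        -- apply concat_in; auto. intro k; apply HGs.
      * assert (HYe : Ys = fun k => img (Gs k)) by (apply functional_extensionality; intro k; apply HGs).
        rewrite HYe. intro x. rewrite concat_iff. split.
        -- intros [g [Hg <-]] k. rewrite concat_iff in Hg. destruct (Hg k) as [y [Hy Hya]].
           exists (y i). split; [exists y; auto|]. apply (agree_prod P I E (A k) g y); auto.
        -- intro H. assert (H' : forall k, exists g, Gs k g /\ agree (E i) (A k) x (g i)).
           { intro k. destruct (H k) as [y [[g [Hg <-]] Hya]]. exists g; auto. }
           destruct (fchoice _ H') as [g Hg].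
           destruct (concat_exists P PM PMst A g HA) as [z Hz].
           exists z. split.
           ++ rewrite concat_iff. intro k. exists (g k). split; [apply Hg | apply Hz].
           ++ apply (ext_part P (E i) (HE i) A); auto. intro k.
              apply (agree_trans P (E i) _ _ (g k i)).
              ** apply (agree_prod P I E (A k) z (g k)). apply Hz.
              ** apply agree_sym. apply Hg.
Qed.

Ltac sp4 := split; [assumption|split; [assumption|split; [assumption|split; [assumption|]]]].

Lemma key U i xi : stable_filter PM PS U ->
  (forall F', stable_filter PM PS F' -> (forall G, U G -> F' G) -> forall G, F' G -> U G) ->
  S i xi -> cluster_point (T i) (PU U i) xi ->
  forall W, B i W -> W xi -> U (fun z => PS z /\ W (z i)).
Proof.
  intros HU Hmax Hxi Hcl.
  assert (Hne : forall G W, U G -> B i W -> W xi -> exists z, G z /\ W (z i)).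
  { intros G W HG HW HWx.
    assert (HP : PU U i (fun y => exists g, G g /\ g i = y)).
    { split. intros y [g [Hg <-]]. apply (sf_sub P PM PS U G HU HG); auto.
      exists G; split; auto. intros g Hg; exists g; auto. }
    destruct (Hcl W (proj1 (HB i) W HW) HWx _ HP) as [y [Hy [g [Hg <-]]]]. exists g; auto. }
  pose (F' := fun H : PM -> Prop => subset H PS /\ exists G W, U G /\ stable_set PM G /\ B i W /\ W xi /\
                 forall z, G z -> W (z i) -> H z).
  destruct (B_nbhd i xi Hxi) as [W0 [HW0 HW0x]].
  destruct (sf_base P PM PS U PS HU (sf_S P PM PS U HU)) as [G0 [HG0s [HG0U _]]].
  assert (HF' : stable_filter PM PS F').
  { split; [split; [|split; [|split; [|split]]]|].
    - intros H [HH _]; auto.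
    - exists PS. split; [|intro; tauto]. split; [intros z Hz; auto|].
      exists G0, W0. sp4. intros z Hz _. apply (sf_sub P PM PS U G0 HU HG0U); auto.
    - intros H [_ [G [W [HG [_ [HW [HWx HH]]]]]]]. destruct (Hne G W HG HW HWx) as [z [Hz1 Hz2]]. exists z; auto.
    - intros H1 H2 [HS1 [G1 [W1 [HG1 [_ [HW1 [HW1x HH1]]]]]]] [HS2 [G2 [W2 [HG2 [_ [HW2 [HW2x HH2]]]]]]].
      exists (fun z => H1 z /\ H2 z). split; [|intro; tauto]. split; [intros z [Hz _]; auto|].
      destruct (sf_base P PM PS U _ HU (sf_inter P PM PS U G1 G2 HU HG1 HG2)) as [G [HGs [HGU HGsub]]].
      destruct (B_inter i xi W1 W2 HW1 HW2 HW1x HW2x) as [W [HW [HWx HWsub]]].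
      exists G, W. sp4. intros z Hz Hw.
      destruct (HGsub z Hz). destruct (HWsub _ Hw). auto.
    - intros G H [HGS [G' [W [HG' [HG's [HW [HWx HH]]]]]]] HGH HHS. split; auto. exists G', W. sp4. intros z a b; apply HGH; auto.
    - exists (fun Y => exists G W, U G /\ stable_set PM G /\ B i W /\ W xi /\ Y = fun z => G z /\ W (z i)).
      split; [split|split; [|split]].
      + intros Y [G [W [HG [HGs [HW [HWx ->]]]]]]. split.
        * intros z [Hz _]. apply (sf_sub P PM PS U G HU HG); auto.
        * exists G, W. sp4. intros z a b; split; auto.
      + intros H [HHS [G [W [HG [HGs [HW [HWx HH]]]]]]]. exists (fun z => G z /\ W (z i)). split.
        * exists G, W; sp4; reflexivity.
        * intros z [Hz1 Hz2]; auto.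
      + exists (fun z => G0 z /\ W0 (z i)), G0, W0; sp4; reflexivity.
      + intros Y [G [W [HG [HGs [HW [HWx ->]]]]]]. split.
        * destruct (Hne G W HG HW HWx) as [z Hz]. exists z; auto.
        * intros A HA ys Hys x Hx. split.
          -- apply (stable_mem P PM G A); auto. intro k. exists (ys k); split; [apply Hys | apply Hx].
          -- apply (stable_mem P (E i) W A); auto. apply B_stable; auto.
             intro k. exists (ys k i); split; [apply Hys|]. apply (agree_prod P I E (A k) x (ys k)). apply Hx.
      + intros A HA Ys HYs.
        assert (Hc : forall k, exists p : (PM -> Prop) * (E i -> Prop), U (fst p) /\ stable_set PM (fst p) /\
                   B i (snd p) /\ snd p xi /\ Ys k = fun z => fst p z /\ snd p (z i)).
        { intro k. destruct (HYs k) as [G [W [H1 [H2 [H3 [H4 H5]]]]]]. exists (G, W); auto. }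
        destruct (fchoice _ Hc) as [p Hp].
        destruct (proj2 (proj2 (HBs i)) A HA (fun k => snd (p k))) as [W [HW HWe]]. intro k; apply Hp.
        pose (G := concat_sets PM A (fun k => fst (p k))).
        assert (HWx : W xi).
        { apply HWe. rewrite concat_iff. intro k. exists xi; split; [apply Hp | apply agree_refl]. }
        exists (fun z => G z /\ W (z i)). split.
        * exists G, W. split; [|split; [|split; [exact HW|split; [exact HWx|reflexivity]]]].
          -- apply concat_in; auto. intro k; apply Hp.
          -- apply concat_stable; auto. apply PMst. intro k; apply Hp.
        * assert (HYe : Ys = fun k z => fst (p k) z /\ snd (p k) (z i))
            by (apply functional_extensionality; intro k; apply Hp).
          rewrite HYe. intro x. rewrite (concat_iff P PM A). split.
          -- intros [Hx1 Hx2] k. apply HWe in Hx2. unfold G in Hx1. rewrite concat_iff in Hx1, Hx2.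
             destruct (Hx1 k) as [g [Hg Hga]]. destruct (Hx2 k) as [w [Hw Hwa]].
             destruct (Hp k) as [HpU [HpS [HpB [HpX _]]]].
             destruct (Hne _ _ HpU HpB HpX) as [c [Hc1 Hc2]].
             pose proof (proj1 HA k) as HAk.
             destruct (glue2 P PM PMst (A k) x c HAk) as [y [Hy1 Hy2]].
             exists y. split; [split|].
             ++ apply (stable_mem2 P PM (fst (p k)) (A k) g c y); auto.
                apply (agree_trans P PM _ _ x); auto.
             ++ apply (stable_mem2 P (E i) (snd (p k)) (A k) w (c i) (y i)); auto. apply B_stable; auto.
                ** apply (agree_trans P (E i) _ _ (x i)); auto. apply (agree_prod P I E (A k) y x); auto.
                ** apply (agree_prod P I E _ y c); auto.
             ++ apply agree_sym; auto.
          -- intro H. split.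
             ++ unfold G. rewrite concat_iff. intro k. destruct (H k) as [y [[Hy1 Hy2] Hya]]. exists y; auto.
             ++ apply HWe. rewrite concat_iff. intro k. destruct (H k) as [y [[Hy1 Hy2] Hya]].
                exists (y i); split; auto. apply (agree_prod P I E (A k) x y); auto. }
  intros W HW HWx.
  apply (Hmax F' HF').
  - intros G HG. split; [apply (sf_sub P PM PS U G HU HG)|].
    destruct (sf_base P PM PS U G HU HG) as [G' [HG's [HG'U HG'G]]].
    exists G', W0. sp4. intros z a b; auto.
  - split; [intros z [Hz _]; auto|]. exists G0, W. sp4.
    intros z Hz Hw; split; auto. apply (sf_sub P PM PS U G0 HU HG0U); auto.
Qed.

Lemma hard_dir : (forall i, stable_compact (E i) (S i) (T i)) -> stable_compact PM PS (prodTop S B).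
Proof.
  intros Hc F HF.
  destruct (max_filter P PM PMst PS PSst F HF) as [U [HU [HFU Hmax]]].
  assert (Hxs : forall i, exists xi, S i xi /\ cluster_point (T i) (PU U i) xi).
  { intro i. apply (Hc i). apply proj_filter; auto. }
  destruct (dchoice _ Hxs) as [x Hx].
  exists x. split; [intro i; apply Hx|].
  intros O [HOsub HObase] HOx G HG.
  destruct (HObase x HOx) as [V [[A [fin [Uk [HA [HUB [HUS HVe]]]]]] [HVx HVO]]].
  apply seq_eq in HVe; subst V.
  rewrite (concat_iff P PM) in HVx.
  assert (HW0 : forall i, exists W, B i W /\ W (x i)) by (intro i; apply B_nbhd; apply Hx).
  pose (Loc := fun k (z : PM) => PS z /\ forall i, In i (fin k) -> exists u, Uk k i u /\ agree (E i) (A k) u (z i)).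
  assert (HLoc : forall k, U (Loc k)).
  { intro k. destruct (HVx k) as [y [Hy Hya]].
    assert (Hl : forall l, (forall i, In i l -> In i (fin k)) ->
              U (fun z : PM => PS z /\ forall i, In i l -> exists u, Uk k i u /\ agree (E i) (A k) u (z i))).
    { induction l as [|i l IH]; intro Hsub.
      - apply (sf_up P PM PS U PS); auto. apply (sf_S P PM PS U HU).
        intros z Hz; split; auto; intros i []. intros z [Hz _]; auto.
      - destruct (HW0 i) as [W0 [HW0i HW0x]].
        destruct (proj2 (proj2 (HBs i)) (part2 P (A k)) (part2_ok P (A k) (proj1 HA k))
                   (fun n => match n with O => Uk k i | _ => W0 end)) as [Z [HZ HZe]].
        { intros [|n]; [apply HUB; apply Hsub; left; auto | exact HW0i]. }
        assert (HZx : Z (x i)).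
        { apply HZe. rewrite concat_iff. intros [|[|n]].
          - exists (y i). split; [apply Hy|]. apply (agree_prod P I E (A k) x y); auto.
          - exists (x i); split; auto; apply agree_refl.
          - exists (x i); split; auto. apply agree_empty; simpl; auto. }
        pose proof (key U i (x i) HU Hmax (proj1 (Hx i)) (proj2 (Hx i)) Z HZ HZx) as HKz.
        pose proof (IH (fun j Hj => Hsub j (or_intror Hj))) as HIH.
        pose proof (sf_inter P PM PS U _ _ HU HKz HIH) as Hint.
        apply (sf_up P PM PS U _ _ HU Hint).
        + intros z [[Hz1 Hz2] [_ Hz3]]. split; auto. intros j [e|Hj]; auto.
          subst j. apply HZe in Hz2. rewrite concat_iff in Hz2. destruct (Hz2 0%nat) as [u [Hu Hua]].
          exists u; split; auto. apply agree_sym; auto.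
        + intros z [Hz _]; auto. }
    apply (Hl (fin k)); auto. }
  destruct (sf_concat P PM PS U A Loc HU HA HLoc) as [Z [HZ HZsub]].
  destruct (sf_ne P PM PS U _ HU (sf_inter P PM PS U Z G HU HZ (HFU G HG))) as [z [Hz1 Hz2]].
  exists z. split; auto.
  apply HVO. rewrite (concat_iff P PM). intro k.
  apply HZsub in Hz1. rewrite concat_iff in Hz1. destruct (Hz1 k) as [g [[Hg1 Hg2] Hga]].
  assert (Hy : forall i, exists v, Uk k i v /\ agree (E i) (A k) v (g i)).
  { intro i. destruct (classic (In i (fin k))) as [Hi|Hi].
    - apply Hg2; auto.
    - exists (g i). split; [apply (proj2 (HUS k i Hi _)); apply Hg1 | apply agree_refl]. }
  destruct (dchoice _ Hy) as [y Hyy].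
  exists y. split; [intro i; apply Hyy|].
  apply agree_prod. intro i. apply (agree_trans P (E i) _ _ (g i)).
  - apply (agree_prod P I E (A k) z g); auto.
  - apply agree_sym; apply Hyy.
Qed.

End Hard.

Theorem mainTheorem9 (P : ProbSpace) (I : Type) (HI : inhabited I)
  (E : I -> L0Module P) (HE : forall i, stable_module (E i))
  (S : forall i, E i -> Prop) (HS : forall i, stable_set (E i) (S i))
  (T : forall i, (E i -> Prop) -> Prop) (HT : forall i, is_topology (S i) (T i))
  (B : forall i, (E i -> Prop) -> Prop)
  (HB : forall i, is_base (T i) (B i))
  (HBs : forall i, stable_coll (E i) (B i)) :
  stable_compact (prodModule E) (prodSet S) (prodTop S B) <->
  (forall i, stable_compact (E i) (S i) (T i)).
Proof.
  split.
  - apply (easy_dir P I E HE S HS T HT B HB).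
  - apply (hard_dir P I E HE S HS T HT B HB HBs).
Qed.
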